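(* Let $(X,d)$ be a complete metric space, $k\ge2$, $0<\rho<1$, and $\mu:X^k\to X$ a nonexpansive, coordinatewise $\rho$-contractive $k$-mean. Then the barycentric operator $\beta$ of $\mu$ is power convergent, and hence there exists a unique continuous $(k+1)$-mean $\tilde\mu:X^{k+1}\to X$ that $\beta$-extends $\mu$. Furthermore, $\tilde\mu$ is nonexpansive and coordinatewise $\rho$-contractive.
   Context: A $k$-mean is a map $\mu:X^k\to X$ with $\mu(x,\ldots,x)=x$. Nonexpansive: $d(\mu(\mathbf{x}),\mu(\mathbf{y}))\le\max_j d(x_j,y_j)$ for all $\mathbf{x},\mathbf{y}\in X^k$. Coordinatewise $\rho$-contractive: $d(\mu(\mathbf{x}),\mu(\mathbf{y}))\le\rho\,d(x_j,y_j)$ whenever $\mathbf{x},\mathbf{y}$ differ only in coordinate $j$. Barycentric operator: $\beta(\mathbf{x})_j=\mu(x_1,\ldots,x_{j-1},x_{j+1},\ldots,x_{k+1})$ on $X^{k+1}$; power convergent: for each $\mathbf{x}$, $\beta^n(\mathbf{x})\to(x^*,\ldots,x^* )$ for some $x^*$. A $(k+1)$-mean $\nu$ $\beta$-extends $\mu$ if $\beta^n(\mathbf{x})\to(\nu(\mathbf{x}),\ldots,\nu(\mathbf{x}))$ for every $\mathbf{x}$. *)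

(* Defs.v *)
From mathcomp Require Import all_boot.
From Stdlib Require Import Reals.
Set Implicit Arguments. Unset Strict Implicit. Unset Printing Implicit Defensive.
Open Scope R_scope.

Section Defs.
Variable X : Type.
Variable d : X -> X -> R.

Definition is_metric : Prop :=
  (forall x y, 0 <= d x y) /\
  (forall x y, d x y = 0 <-> x = y) /\
  (forall x y, d x y = d y x) /\
  (forall x y z, d x z <= d x y + d y z).

Definition seq_converges (u : nat -> X) (l : X) : Prop :=
  forall eps, 0 < eps -> exists N, forall n, (N <= n)%nat -> d (u n) l < eps.

Definition cauchy_seq (u : nat -> X) : Prop :=
  forall eps, 0 < eps -> exists N, forall m n, (N <= m)%nat -> (N <= n)%nat ->
    d (u m) (u n) < eps.

Definition complete : Prop :=
  forall u, cauchy_seq u -> exists l, seq_converges u l.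

Definition dmax (k : nat) (x y : 'I_k -> X) : R :=
  \big[Rmax/0]_(j < k) d (x j) (y j).

Definition is_mean (k : nat) (mu : ('I_k -> X) -> X) : Prop :=
  forall x : X, mu (fun _ => x) = x.

Definition nonexpansive (k : nat) (mu : ('I_k -> X) -> X) : Prop :=
  forall x y : 'I_k -> X, d (mu x) (mu y) <= dmax x y.

Definition coord_contractive (rho : R) (k : nat) (mu : ('I_k -> X) -> X) : Prop :=
  forall (x y : 'I_k -> X) (j : 'I_k),
    (forall i, i != j -> x i = y i) -> d (mu x) (mu y) <= rho * d (x j) (y j).

Definition continuous_mean (k : nat) (mu : ('I_k -> X) -> X) : Prop :=
  forall x eps, 0 < eps -> exists delta, 0 < delta /\
    forall y, dmax x y < delta -> d (mu x) (mu y) < eps.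

(* barycentric operator on X^(k+1): coordinate j is mu applied to x with x_j deleted *)
Definition barycentric (k : nat) (mu : ('I_k -> X) -> X) (x : 'I_k.+1 -> X)
  : 'I_k.+1 -> X :=
  fun j => mu (fun i : 'I_k => x (lift j i)).

Definition tuple_converges (m : nat) (u : nat -> 'I_m -> X) (l : 'I_m -> X) : Prop :=
  forall eps, 0 < eps -> exists N, forall n, (N <= n)%nat -> dmax (u n) l < eps.

Definition power_convergent (k : nat) (mu : ('I_k -> X) -> X) : Prop :=
  forall x : 'I_k.+1 -> X, exists xs : X,
    tuple_converges (fun n => iter n (barycentric mu) x) (fun _ => xs).

Definition beta_extends (k : nat) (mu : ('I_k -> X) -> X) (nu : ('I_k.+1 -> X) -> X)
  : Prop :=
  forall x : 'I_k.+1 -> X,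
    tuple_converges (fun n => iter n (barycentric mu) x) (fun _ => nu x).

End Defs.

(* Main.v *)
Require Import Defs.
From mathcomp Require Import all_boot.
From Stdlib Require Import Reals Lra ClassicalEpsilon FunctionalExtensionality.
Open Scope R_scope.
Set Implicit Arguments. Unset Strict Implicit.

Section Aux.
Variable X : Type.
Variable d : X -> X -> R.
Hypothesis hmet : is_metric d.

Lemma d_ge0 x y : 0 <= d x y. Proof. by case: hmet. Qed.
Lemma d_xx x : d x x = 0. Proof. case: hmet => _ [h _]; by apply h. Qed.
Lemma d_sym x y : d x y = d y x. Proof. by case: hmet => _ [_ [h _]]. Qed.
Lemma d_tri x y z : d x z <= d x y + d y z. Proof. by case: hmet => _ [_ [_ h]]. Qed.

Lemma dmax_le m (x y : 'I_m -> X) c : 0 <= c -> (forall j, d (x j) (y j) <= c) -> dmax d x y <= c.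
Proof.
move=> c0 h; rewrite /dmax; apply: (big_ind (fun r => r <= c)) => //.
by move=> a b ha hb; apply Rmax_lub.
Qed.

Lemma dmax_ge0 m (x y : 'I_m -> X) : 0 <= dmax d x y.
Proof.
rewrite /dmax; apply: (big_ind (fun r => 0 <= r)) => //; first lra.
by move=> a b ha hb; apply (Rle_trans _ _ _ ha); apply Rmax_l.
by move=> i _; apply d_ge0.
Qed.

Lemma dmax_ge m (x y : 'I_m -> X) j : d (x j) (y j) <= dmax d x y.
Proof.
rewrite /dmax.
have : j \in index_enum 'I_m by apply mem_index_enum.
elim: (index_enum 'I_m) => [//|a s IH]; rewrite in_cons big_cons /=.
case/orP => [/eqP -> | hs]; first by apply Rmax_l.
apply (Rle_trans _ _ _ (IH hs)); apply Rmax_r.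
Qed.

Lemma dmax_xx m (x : 'I_m -> X) : dmax d x x = 0.
Proof.
apply Rle_antisym; last by apply dmax_ge0.
by apply dmax_le; [lra| move=> j; rewrite d_xx; lra].
Qed.

Lemma limit_unique m (u : nat -> 'I_m.+1 -> X) a b :
  tuple_converges d u (fun _ => a) -> tuple_converges d u (fun _ => b) -> a = b.
Proof.
move=> ha hb.
have : d a b = 0.
  apply Rle_antisym; last by apply d_ge0.
  apply le_epsilon => eps he.
  have he2 : 0 < eps / 2 by lra.
  case: (ha _ he2) => N1 H1; case: (hb _ he2) => N2 H2.
  have h1 := H1 (maxn N1 N2) (leq_maxl _ _).
  have h2 := H2 (maxn N1 N2) (leq_maxr _ _).
  have g1 := dmax_ge (u (maxn N1 N2)) (fun _ => a) ord0.
  have g2 := dmax_ge (u (maxn N1 N2)) (fun _ => b) ord0.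
  simpl in g1, g2.
  have t := d_tri a (u (maxn N1 N2) ord0) b.
  rewrite (d_sym a (u _ ord0)) in t. lra.
by case: hmet => _ [h _] /h.
Qed.

Lemma limit_le m (u v : nat -> 'I_m.+1 -> X) a b (c : R) :
  tuple_converges d u (fun _ => a) -> tuple_converges d v (fun _ => b) ->
  (forall n : nat, (1 <= n)%nat -> dmax d (u n) (v n) <= c) -> d a b <= c.
Proof.
move=> ha hb hc.
apply le_epsilon => eps he.
have he2 : 0 < eps / 2 by lra.
case: (ha _ he2) => N1 H1; case: (hb _ he2) => N2 H2.
set n := maxn 1 (maxn N1 N2).
have h1 := H1 n (leq_trans (leq_maxl _ _) (leq_maxr _ _)).
have h2 := H2 n (leq_trans (leq_maxr _ _) (leq_maxr _ _)).
have h3 := hc n (leq_maxl _ _).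
have g1 := dmax_ge (u n) (fun _ => a) ord0.
have g2 := dmax_ge (v n) (fun _ => b) ord0.
have g3 := dmax_ge (u n) (v n) ord0.
simpl in g1, g2.
have t := d_tri a (u n ord0) b.
have t2 := d_tri (u n ord0) (v n ord0) b.
rewrite (d_sym a (u _ ord0)) in t. lra.
Qed.

Lemma bigmax_ge m (F : 'I_m -> R) j : F j <= \big[Rmax/0]_(i < m) F i.
Proof.
have : j \in index_enum 'I_m by apply mem_index_enum.
elim: (index_enum 'I_m) => [//|a s IH]; rewrite in_cons big_cons /=.
case/orP => [/eqP -> | hs]; first by apply Rmax_l.
apply (Rle_trans _ _ _ (IH hs)); apply Rmax_r.
Qed.

Lemma bigmax_le m (F : 'I_m -> R) c : 0 <= c -> (forall j, F j <= c) -> \big[Rmax/0]_(i < m) F i <= c.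
Proof.
move=> c0 h; apply: (big_ind (fun r => r <= c)) => //.
by move=> a b ha hb; apply Rmax_lub.
Qed.

Lemma bigmax_ge0 m (F : 'I_m -> R) : (forall j, 0 <= F j) -> 0 <= \big[Rmax/0]_(i < m) F i.
Proof.
move=> h; apply: (big_ind (fun r => 0 <= r)) => //; first lra.
by move=> a b ha hb; apply (Rle_trans _ _ _ ha); apply Rmax_l.
Qed.

Hypothesis hcomp : complete d.
Variable k : nat.
Variable rho : R.
Hypothesis hrho : 0 < rho < 1.
Variable mu : ('I_k -> X) -> X.
Hypothesis hmean : is_mean mu.
Hypothesis hne : nonexpansive d mu.
Hypothesis hcontr : coord_contractive d rho mu.

Let B := barycentric mu.

Lemma B_ne x y : dmax d (B x) (B y) <= dmax d x y.
Proof.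
apply dmax_le => //; first by apply dmax_ge0.
move=> j; apply (Rle_trans _ _ _ (@hne _ _)).
apply dmax_le => //; first by apply dmax_ge0.
move=> i; apply dmax_ge.
Qed.

Lemma iter_ne n x y : dmax d (iter n B x) (iter n B y) <= dmax d x y.
Proof.
elim: n => [|n IH] /=; first lra.
exact: Rle_trans (B_ne _ _) IH.
Qed.

Lemma B_contr (x y : 'I_k.+1 -> X) j : (forall i, i != j -> x i = y i) ->
  dmax d (B x) (B y) <= rho * d (x j) (y j).
Proof.
move=> H.
have hc : 0 <= rho * d (x j) (y j) by apply Rmult_le_pos; [lra | apply d_ge0].
apply dmax_le => // i.
case: (eqVneq i j) => [->|hij].
  rewrite /B /barycentric.
  have -> : (fun l => y (lift j l)) = (fun l => x (lift j l)).
    apply functional_extensionality => l; symmetry; apply H.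
    by rewrite eq_sym neq_lift.
  by rewrite d_xx.
case: (unlift_some hij) => l hl _.
have h := @hcontr (fun m => x (lift i m)) (fun m => y (lift i m)) l.
rewrite /= -hl in h; apply h.
by move=> m hm; apply H; rewrite hl (inj_eq lift_inj).
Qed.

Definition Adj (x : 'I_k.+1 -> X) := \big[Rmax/0]_(m < k) d (x (inord m)) (x (inord m.+1)).

Lemma Adj_ge0 x : 0 <= Adj x.
Proof. apply bigmax_ge0 => j; apply d_ge0. Qed.

Lemma B_adj x (m : 'I_k) :
  d (B x (inord m)) (B x (inord m.+1)) <= rho * d (x (inord m)) (x (inord m.+1)).
Proof.
have hm : (m < k.+1)%nat by apply: leq_trans (ltn_ord m) _.
have hm1 : (m.+1 < k.+1)%nat by rewrite ltnS.
have h := @hcontr (fun i => x (lift (inord m) i)) (fun i => x (lift (inord m.+1) i)) m.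
have e1 : lift (inord m) m = inord m.+1 :> 'I_k.+1.
  by apply val_inj; rewrite /= /bump !inordK // leqnn.
have e2 : lift (inord m.+1) m = inord m :> 'I_k.+1.
  by apply val_inj; rewrite /= /bump !inordK // ltnn.
rewrite /= e1 e2 (d_sym (x (inord m.+1))) in h.
apply h => i hi; congr x; apply val_inj; rewrite /= /bump !inordK //.
move: hi; rewrite -(inj_eq val_inj) /=.
case: ltngtP => // -> ; by rewrite eqxx.
Qed.

Lemma Adj_B x : Adj (B x) <= rho * Adj x.
Proof.
apply bigmax_le.
  apply Rmult_le_pos; [lra | apply Adj_ge0].
move=> m; apply (Rle_trans _ _ _ (B_adj x m)).
apply Rmult_le_compat_l; first lra.
exact: (bigmax_ge (fun m : 'I_k => d (x (inord m)) (x (inord m.+1))) m).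
Qed.

Lemma diam0 x m : (m <= k)%nat -> d (x (inord m)) (x (inord 0)) <= INR m * Adj x.
Proof.
elim: m => [|m IH] hm; first by rewrite d_xx /=; lra.
have hmk : (m < k)%nat by [].
have h2 := IH (ltnW hm).
have h1 : d (x (inord m)) (x (inord m.+1)) <= Adj x :=
  bigmax_ge (fun m : 'I_k => d (x (inord m)) (x (inord m.+1))) (Ordinal hmk).
have h3 := d_tri (x (inord m.+1)) (x (inord m)) (x (inord 0)).
rewrite (d_sym (x (inord m.+1)) (x (inord m))) in h3.
rewrite S_INR; lra.
Qed.

Lemma diam x i j : d (x i) (x j) <= 2 * INR k * Adj x.
Proof.
have hb : forall i : 'I_k.+1, d (x i) (x (inord 0)) <= INR k * Adj x.
  move=> i0; rewrite -{1}(inord_val i0).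
  apply (Rle_trans _ _ _ (diam0 x (ltn_ord i0))).
  apply Rmult_le_compat_r; first by apply Adj_ge0.
  by apply le_INR; apply/leP; rewrite -ltnS.
have := hb i; have := hb j; have := d_tri (x i) (x (inord 0)) (x j).
rewrite (d_sym (x (inord 0)) (x j)). lra.
Qed.


Lemma small_pow y : 0 < y -> exists N, forall n, (N <= n)%nat -> rho ^ n < y.
Proof.
move=> hy.
have hr : Rabs rho < 1 by rewrite Rabs_pos_eq; lra.
case: (@pow_lt_1_zero rho hr y hy) => N HN; exists N => n hn.
have := HN n (ssrnat.leP hn); rewrite Rabs_pos_eq //; apply pow_le; lra.
Qed.

Lemma geo (v : nat -> X) c : (forall n, d (v n.+1) (v n) <= c * rho ^ n) ->
  forall n p, d (v (n + p)%nat) (v n) * (1 - rho) <= c * (rho ^ n - rho ^ (n + p)).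
Proof.
move=> hs n; elim => [|p IH].
  rewrite addn0 d_xx; lra.
rewrite addnS.
have h1 := d_tri (v (n + p).+1) (v (n + p)%nat) (v n).
have h2 := hs (n + p)%nat.
have h3 : rho ^ (n + p).+1 = rho ^ (n + p) * rho by rewrite -tech_pow_Rmult; ring.
have h4 : d (v (n + p).+1) (v n) * (1 - rho) <=
          (d (v (n + p).+1) (v (n + p)%nat) + d (v (n + p)%nat) (v n)) * (1 - rho).
  apply Rmult_le_compat_r; lra.
have h5 : d (v (n + p).+1) (v (n + p)%nat) * (1 - rho) <= c * rho ^ (n + p) * (1 - rho).
  apply Rmult_le_compat_r; lra.
rewrite h3; nra.
Qed.

Lemma cauchy_geo (v : nat -> X) c : 0 <= c -> (forall n, d (v n.+1) (v n) <= c * rho ^ n) ->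
  cauchy_seq d v.
Proof.
move=> c0 hs eps he.
have hy : 0 < eps * (1 - rho) / (2 * (c + 1)).
  apply Rdiv_lt_0_compat; nra.
case: (small_pow hy) => N HN; exists N => m n hm hn.
have hb : forall q, (N <= q)%nat -> d (v q) (v N) * (1 - rho) <= c * rho ^ N.
  move=> q hq; rewrite -(subnKC hq).
  have := geo hs N (q - N); have := pow_le rho (N + (q - N)) (ltac:(lra)); nra.
have hrN := HN N (leqnn N).
have hpN := pow_le rho N (ltac:(lra)).
have e : eps * (1 - rho) / (2 * (c + 1)) * (2 * (c + 1)) = eps * (1 - rho) by field; lra.
have hm' := hb m hm; have hn' := hb n hn.
have t := d_tri (v m) (v N) (v n); rewrite (d_sym (v N) (v n)) in t.
apply (Rmult_lt_reg_r (1 - rho)); first lra.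
have t' : d (v m) (v n) * (1 - rho) <= (d (v m) (v N) + d (v n) (v N)) * (1 - rho).
  apply Rmult_le_compat_r; lra.
nra.
Qed.

Lemma pc : power_convergent d mu.
Proof.
move=> x.
pose u := fun n => iter n B x.
pose c := 2 * INR k * Adj x.
have c0 : 0 <= c.
  have := pos_INR k; have := Adj_ge0 x; rewrite /c; nra.
have hA : forall n, Adj (u n) <= rho ^ n * Adj x.
  elim => [|n IH] /=; first lra.
  apply (Rle_trans _ _ _ (Adj_B _)).
  have := Adj_ge0 x; nra.
have hD : forall n i j, d (u n i) (u n j) <= c * rho ^ n.
  move=> n i j; apply (Rle_trans _ _ _ (diam _ i j)).
  have := hA n; have := pos_INR k; rewrite /c; nra.
have hstep : forall n, d (u n.+1 ord0) (u n ord0) <= c * rho ^ n.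
  move=> n.
  have h := @hne (fun i => u n (lift ord0 i)) (fun _ => u n ord0).
  rewrite hmean in h; apply (Rle_trans _ _ _ h).
  apply dmax_le; last by move=> i; apply hD.
  have := pow_le rho n (ltac:(lra)); nra.
have [l hl] := hcomp (cauchy_geo c0 hstep).
exists l => eps he.
have he2 : 0 < eps / 2 by lra.
case: (hl _ he2) => N1 H1.
have hy : 0 < eps / (2 * (c + 1)) by apply Rdiv_lt_0_compat; nra.
case: (small_pow hy) => N2 H2.
exists (maxn N1 N2) => n hn.
have h1 := H1 n (leq_trans (leq_maxl _ _) hn).
have h2 := H2 n (leq_trans (leq_maxr _ _) hn).
have hp := pow_le rho n (ltac:(lra)).
have e : eps / (2 * (c + 1)) * (2 * (c + 1)) = eps by field; lra.
have h3 : (c + 1) * rho ^ n < (c + 1) * (eps / (2 * (c + 1))).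
  apply Rmult_lt_compat_l; lra.
have hc : c * rho ^ n < eps / 2.
  clearbody c u.
  have h4 : (c + 1) * (eps / (2 * (c + 1))) = eps / 2 by field; lra.
  nra.
have hj : forall j, d (u n j) l <= c * rho ^ n + d (u n ord0) l.
  move=> j; have := d_tri (u n j) (u n ord0) l; have := hD n j ord0; lra.
apply: (Rle_lt_trans _ (c * rho ^ n + d (u n ord0) l)); last lra.
apply dmax_le; first by have := d_ge0 (u n ord0) l; nra.
exact: hj.
Qed.

End Aux.

Theorem proposition3p13 (X : Type) (d : X -> X -> R)
  (hmet : is_metric d) (hcomp : complete d)
  (k : nat) (hk : (2 <= k)%nat) (rho : R) (hrho : 0 < rho < 1)
  (mu : ('I_k -> X) -> X)
  (hmean : is_mean mu) (hne : nonexpansive d mu) (hcontr : coord_contractive d rho mu) :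
  power_convergent d mu /\
  (exists nu : ('I_k.+1 -> X) -> X,
     (is_mean nu /\ continuous_mean d nu /\ beta_extends d mu nu) /\
     (forall nu' : ('I_k.+1 -> X) -> X,
        is_mean nu' -> continuous_mean d nu' -> beta_extends d mu nu' ->
        forall x, nu' x = nu x) /\
     nonexpansive d nu /\ coord_contractive d rho nu).
Proof.
have hpc : power_convergent d mu := pc hmet hcomp hrho hmean hne hcontr.
split => //.
pose nu := fun x => proj1_sig (constructive_indefinite_description _ (hpc x)).
have hnu : beta_extends d mu nu.
  by move=> x; rewrite /nu; case: (constructive_indefinite_description _ _).
have hnuE : nonexpansive d nu.
  move=> x y; apply (limit_le hmet (hnu x) (hnu y)) => n _.
  exact: iter_ne.
exists nu; split; [split; [|split] | split; [|split]] => //.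
- move=> a.
  have hc : forall n, iter n (barycentric mu) (fun _ => a) = (fun _ => a).
    elim => [//|n IH] /=; rewrite IH.
    by apply functional_extensionality => j; rewrite /barycentric hmean.
  apply (limit_unique hmet (hnu (fun _ => a))).
  move=> eps he; exists 0%nat => n _; rewrite hc dmax_xx //.
- move=> x eps he; exists eps; split => // y hy.
  exact: Rle_lt_trans (hnuE x y) hy.
- move=> nu' _ _ h x; exact: (limit_unique hmet (h x) (hnu x)).
- move=> x y j H; apply (limit_le hmet (hnu x) (hnu y)) => n hn.
  case: n hn => [//|n] _.
  rewrite !iterSr.
  apply (Rle_trans _ _ _ (iter_ne hmet hne _ _ _)).
  exact (@B_contr X d hmet k rho hrho mu hcontr x y j H).
Qed.
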